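(* For all $n\ge1$, $$\mathbf{Sf}_{n,1}(p,q)=q^{n-1}\qquad\text{and}\qquad \mathbf{cf}_{n,1}(p,q)=\prod_{i=1}^{n-1}F_i(p,q).$$ For all $n\ge2$, $$\mathbf{Sf}_{n,2}(p,q)=q^{n-2}[n-1]_q\qquad\text{and}\qquad \mathbf{cf}_{n,n-1}(p,q)=\mathbf{Sf}_{n,n-1}(p,q)=\sum_{i=1}^{n-1}F_i(p,q).$$
   Context: $F_1(p,q)=q$, $F_2(p,q)=q^2$ and $F_m(p,q)=qF_{m-1}(p,q)+pF_{m-2}(p,q)$ for $m\ge3$. Let $(x)_{\downarrow_{F,p,q,0}}=(x)_{\uparrow_{F,p,q,0}}=1$ and for $k\ge1$, $(x)_{\downarrow_{F,p,q,k}}=x(x-F_1(p,q))\cdots(x-F_{k-1}(p,q))$ and $(x)_{\uparrow_{F,p,q,k}}=x(x+F_1(p,q))\cdots(x+F_{k-1}(p,q))$. Define $\mathbf{Sf}_{n,k}(p,q)$ and $\mathbf{cf}_{n,k}(p,q)$ for $0\le k\le n$ by $x^n=\sum_{k=0}^n\mathbf{Sf}_{n,k}(p,q)(x)_{\downarrow_{F,p,q,k}}$ and $(x)_{\uparrow_{F,p,q,n}}=\sum_{k=0}^n\mathbf{cf}_{n,k}(p,q)x^k$. For $m\ge1$, $[m]_q=1+q+\cdots+q^{m-1}$. *)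

(* Defs.v *)
From mathcomp Require Import all_boot all_order all_algebra.
Set Implicit Arguments. Unset Strict Implicit. Unset Printing Implicit Defensive.
Import GRing.Theory.
Local Open Scope ring_scope.

Fixpoint Fpq (R : comNzRingType) (p q : R) (m : nat) : R :=
  match m with
  | 0 => 0
  | 1 => q
  | (m'.+1 as m1).+1 => q * Fpq p q m1 + p * Fpq p q m'
  end.

(* (x)_{down F,p,q,k} = x (x - F_1) ... (x - F_{k-1}); empty product = 1 *)
Definition ffallF (R : comNzRingType) (p q : R) (k : nat) : {poly R} :=
  \prod_(i < k) ('X - (Fpq p q i)%:P).

(* (x)_{up F,p,q,k} = x (x + F_1) ... (x + F_{k-1}) *)
Definition frisF (R : comNzRingType) (p q : R) (k : nat) : {poly R} :=
  \prod_(i < k) ('X + (Fpq p q i)%:P).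

Definition cfF (R : comNzRingType) (p q : R) (n k : nat) : R :=
  (frisF p q n)`_k.

Definition qint (R : comNzRingType) (q : R) (m : nat) : R :=
  \sum_(i < m) q ^+ i.

(* Main.v *)
Require Import Defs.
From mathcomp Require Import all_boot all_order all_algebra.
From mathcomp Require Import zify ring.
Import GRing.Theory.
Local Open Scope ring_scope.

Section S.
Variables (R : comNzRingType).

Lemma prod_monic (c : nat -> R) k :
  \prod_(i < k) ('X + (c i)%:P) \is monic /\
  size (\prod_(i < k) ('X + (c i)%:P)) = k.+1.
Proof.
elim: k => [|k [Hm Hs]]; first by rewrite big_ord0 monic1 size_poly1.
rewrite big_ord_recr /=; split; first by rewrite monicMl // monicXaddC.
rewrite size_Mmonic ?monicXaddC ?monic_neq0 // Hs size_XaddC; set u := (_ + _)%N; rewrite /u; simpl; lia.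

Qed.

Lemma ffall_eq (p q : R) k : ffallF p q k = \prod_(i < k) ('X + (- Fpq p q i)%:P).
Proof. by apply: eq_bigr => i _; rewrite polyCN. Qed.

Lemma ffall_size (p q : R) k : size (ffallF p q k) = k.+1.
Proof. by rewrite ffall_eq; case: (prod_monic (fun i => - Fpq p q i) k). Qed.

Lemma ffall_lead (p q : R) k : (ffallF p q k)`_k = 1.
Proof.
rewrite ffall_eq; case: (prod_monic (fun i => - Fpq p q i) k) => /monicP.
by rewrite /lead_coef => + Hs; rewrite Hs.
Qed.

Lemma uniq0 (p q : R) n (a : nat -> R) :
  \sum_(k < n.+1) a k *: ffallF p q k = 0 -> forall k, (k <= n)%N -> a k = 0.
Proof.
elim: n a => [|n IH] a H k Hk.
  move: Hk; rewrite leqn0 => /eqP ->.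
  move: H; rewrite big_ord1 /ffallF big_ord0 => /(congr1 (fun P : {poly R} => P`_0)).
  by rewrite coefZ coef1 mulr1 coef0.
have Han : a n.+1 = 0.
  move: H => /(congr1 (fun P : {poly R} => P`_n.+1)).
  rewrite big_ord_recr /= coefD coefZ ffall_lead mulr1 coef_sum coef0 big1 ?add0r //.
  move=> i _; rewrite coefZ nth_default ?mulr0 // ffall_size; exact: ltn_ord.
move: Hk; rewrite leq_eqVlt => /orP [/eqP -> //|Hk].
apply: (IH a) => //.
by move: H; rewrite big_ord_recr /= Han scale0r addr0.
Qed.
Lemma Xffall (p q : R) k : 'X * ffallF p q k = ffallF p q k.+1 + Fpq p q k *: ffallF p q k.
Proof.
rewrite /ffallF big_ord_recr /= -mul_polyC.
set P := \prod_(i < k) _. rewrite mulrBr mulrC -addrA [_ * P]mulrC addNr addr0 //.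
Qed.

Variables (p q : R) (Sf : nat -> nat -> R)
  (hSf : forall n : nat, 'X ^+ n = \sum_(k < n.+1) Sf n k *: ffallF p q k).

Definition cc n k := (if k is k'.+1 then Sf n k' else 0) +
   (if (k <= n)%N then Fpq p q k * Sf n k else 0).

Lemma rec n k : (k <= n.+1)%N -> Sf n.+1 k = cc n k.
Proof.
move=> Hk; apply/eqP; rewrite -subr_eq0; apply/eqP.
apply: (@uniq0 p q n.+1 (fun k => Sf n.+1 k - cc n k)) => //.
under eq_bigr => i _ do rewrite scalerBl.
rewrite sumrB -hSf; apply/eqP; rewrite subr_eq0; apply/eqP.
rewrite exprS hSf mulr_sumr.
under eq_bigr => i _ do rewrite -scalerAr Xffall scalerDr scalerA.
rewrite big_split /=.
under [X in _ = X]eq_bigr => i _ do rewrite /cc scalerDl.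
rewrite big_split /= [X in _ = X + _]big_ord_recl [X in _ = _ + X]big_ord_recr /=.
rewrite scale0r add0r ltnn scale0r addr0.
congr (_ + _); apply: eq_bigr => i _; rewrite -ltnS ltn_ord mulrC //.
Qed.
Lemma S00 : Sf 0 0 = 1.
Proof.
have := congr1 (fun P : {poly R} => P`_0) (hSf 0).
by rewrite /= big_ord1 /ffallF big_ord0 coefZ expr0 coef1 mulr1.
Qed.

Lemma Snn n : Sf n n = 1.
Proof. elim: n => [|n IH]; first exact: S00.
by rewrite rec // /cc ltnn addr0. Qed.

Lemma Sn0 n : Sf n.+1 0 = 0.
Proof. by rewrite rec // /cc /= mul0r add0r. Qed.

Lemma S1 n : Sf n.+1 1 = q ^+ n.
Proof. elim: n => [|n IH]; first by rewrite Snn expr0.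
by rewrite rec // /cc Sn0 /= IH add0r exprS. Qed.

Lemma qintS m : qint q m.+1 = 1 + q * qint q m.
Proof. rewrite /qint big_ord_recl expr0 mulr_sumr; congr (_ + _).
by apply: eq_bigr => i _; rewrite exprS. Qed.

Lemma S2 n : Sf n.+2 2 = q ^+ n * qint q n.+1.
Proof. elim: n => [|n IH]; first by rewrite Snn expr0 mul1r /qint big_ord1 expr0.
rewrite rec // /cc /= IH S1 (qintS n.+1) (qintS n) !exprS; ring.
Qed.

Lemma Snm n : Sf n.+1 n = \sum_(0 <= i < n) Fpq p q i.+1.
Proof. elim: n => [|n IH]; first by rewrite Sn0 big_geq.
by rewrite rec // /cc IH leqnn Snn mulr1 big_nat_recr. Qed.
Lemma cfm n : (frisF p q n.+1)`_n = \sum_(0 <= i < n.+1) Fpq p q i.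
Proof. elim: n => [|n IH].
  by rewrite /frisF big_ord1 big_nat1 coefD coefX coefC /= addr0.
have L : (frisF p q n.+1)`_n.+1 = 1.
  case: (prod_monic (fun i => Fpq p q i) n.+1) => /monicP; rewrite /lead_coef => + Hs.
  by rewrite -/(frisF p q n.+1) Hs /=.
rewrite {1}/frisF big_ord_recr /= mulrDr coefD coefMX coefMC.
rewrite (_ : (n.+1 == 0)%N = false) // -/(frisF p q n.+1) L mul1r IH.
by rewrite [in RHS]big_nat_recr.
Qed.

Lemma cf1 n : (frisF p q n.+1)`_1 = \prod_(1 <= i < n.+1) Fpq p q i.
Proof.
rewrite /frisF big_ord_recl /= polyC0 addr0 coefXM /= -horner_coef0 horner_prod.
rewrite big_add1 /= big_mkord; apply: eq_bigr => i _.
by rewrite hornerD hornerX hornerC add0r.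
Qed.
End S.

Theorem theorem9 (R : comNzRingType) (p q : R) (Sf : nat -> nat -> R)
  (hSf : forall n : nat,
     'X ^+ n = \sum_(k < n.+1) Sf n k *: ffallF p q k) :
  (forall n : nat, (1 <= n)%N ->
     Sf n 1%N = q ^+ n.-1 /\
     cfF p q n 1 = \prod_(1 <= i < n) Fpq p q i) /\
  (forall n : nat, (2 <= n)%N ->
     Sf n 2%N = q ^+ (n - 2) * qint q n.-1 /\
     cfF p q n n.-1 = Sf n n.-1 /\
     Sf n n.-1 = \sum_(1 <= i < n) Fpq p q i).
Proof.
split.
  case=> // n _; split.
  exact: (@S1 _ _ _ _ hSf n).
  rewrite /cfF; exact: cf1.
case=> // [] // n; case: n => // n _.
have E : \sum_(1 <= i < n.+2) Fpq p q i = \sum_(0 <= i < n.+1) Fpq p q i.+1.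
  by rewrite big_add1.
rewrite /= subn2 /= (@S2 _ _ _ _ hSf); split => //.
rewrite /cfF cfm (@Snm _ _ _ _ hSf) E; split => //.
by rewrite big_nat_recl //= add0r.
Qed.
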